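(* For any $K\ge0$, any distribution generating $(x_t,\mathscr C_t)_{t=1}^V$, and any class $L\subseteq[\kappa]^{\mathcal X}$ of benchmark predictors, there exists a strategy for choosing the labels $y_1,\dots,y_V$ such that every prediction algorithm satisfies $$\mathbb E[\mathbf{Reg}]\ge\frac1\kappa\,\mathbb E_{(\mathscr C,x)_{1:V}}\mathrm{Rad}_V(L_K(\mathcal I_{1:V})).$$
   Context: Notation: $[n]=\{1,\dots,n\}$. Setting: $V\ge1$, $\kappa\ge2$, a set $\mathcal X$, a class $L$ of functions $\mathcal X\to[\kappa]$. A constraint $c=(S_c,R_c)$, $S_c\subseteq[V]$, $R_c:[\kappa]^{S_c}\to\mathbb R_{\ge0}$; $c(g)=R_c(g|_{S_c})$ for $g\in[\kappa]^V$. On rounds $t=1,\dots,V$ the forecaster observes $x_t\in\mathcal X$ and a finite constraint set $\mathscr C_t$ ($\mathcal I_t=(\mathscr C_t,x_t)$, drawn from a known distribution), predicts $\widehat y_t\in[\kappa]$ (possibly randomized), then observes $y_t\in[\kappa]$. $L_K(\mathcal I_{1:V})=\{f\in L:\sum_{c\in\cup_t\mathscr C_t}c((f(x_1),\dots,f(x_V)))\le K\}$; $\mathbf{Reg}=\sum_t\mathbf 1\{\widehat y_t\ne y_t\}-\inf_{f\in L_K(\mathcal I_{1:V})}\sum_t\mathbf 1\{f(x_t)\ne y_t\}$, expectation over all randomness. $\mathrm{Rad}_V(L_K(\mathcal I_{1:V}))=\mathbb E_{\boldsymbol\epsilon}\sup_{f\in L_K(\mathcal I_{1:V})}\sum_{j=1}^V\sum_{k=1}^\kappa\boldsymbol\epsilon_{j,k}\mathbf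 1\{f(x_j)=k\}$ with $\boldsymbol\epsilon_{j,k}$ i.i.d. uniform on $\{-1,1\}$. *)

(* Defs.v *)
From HB Require Import structures.
From mathcomp Require Import all_boot all_order all_algebra.
From mathcomp Require Import all_classical all_reals all_analysis.
Set Implicit Arguments. Unset Strict Implicit. Unset Printing Implicit Defensive.
Import Order.TTheory GRing.Theory Num.Theory.
Local Open Scope classical_set_scope.
Local Open Scope ring_scope.

(* Labels [kappa] = {1,..,kappa} are represented by 'I_kappa = {0,..,kappa-1};
   rounds [V] by 'I_V. *)

Section Setting.
Variables (R : realType) (V kappa : nat).

Record constraint := Constraint {
  cS : {set 'I_V};
  cR : {ffun {i : 'I_V | i \in cS} -> 'I_kappa} -> R;
  cR_ge0 : forall h, 0 <= cR h }.

HB.instance Definition _ := gen_eqMixin constraint.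
HB.instance Definition _ := gen_choiceMixin constraint.

Definition ceval (c : constraint) (g : 'I_V -> 'I_kappa) : R :=
  @cR c [ffun i => g (val i)].

Variable X : Type.

(* One round's side information I_t = (C_t, x_t); C_t a finite set of
   constraints (given as a finite list). *)
Definition instance := (seq constraint * X)%type.

Definition all_constraints (I : 'I_V -> instance) : set constraint :=
  [set c | exists t : 'I_V, c \in (I t).1].

Definition LK (L : set (X -> 'I_kappa)) (K : R) (I : 'I_V -> instance)
  : set (X -> 'I_kappa) :=
  [set f | L f /\
     (\sum_(c \in all_constraints I) ceval c (fun t => f (I t).2) <= K)%R].

(* A (behavioural) randomized strategy: given the history
   (I_1..I_t, yhat_1..yhat_{t-1}, y_1..y_{t-1}) it returns a probability
   mass function on [kappa]. *)
Definition strategy := seq instance -> seq 'I_kappa -> seq 'I_kappa -> 'I_kappa -> R.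

Definition valid_strategy (s : strategy) :=
  forall hI hp hy, (forall k, 0 <= s hI hp hy k) /\ \sum_k s hI hp hy k = 1.

Definition seq_of (T : Type) (u : 'I_V -> T) : seq T := [seq u i | i <- enum 'I_V].

(* probability that forecaster F and adversary A produce predictions yh and
   labels y on the instance sequence I; at round t both see I_{1:t},
   yh_{1:t-1}, y_{1:t-1} and randomize independently. *)
Definition play_prob (F A : strategy) (I : 'I_V -> instance)
  (yh y : {ffun 'I_V -> 'I_kappa}) : R :=
  \prod_(t < V)
    (F (take t.+1 (seq_of I)) (take t (seq_of yh)) (take t (seq_of y)) (yh t) *
     A (take t.+1 (seq_of I)) (take t (seq_of yh)) (take t (seq_of y)) (y t)).

Definition nmistakes (p y : 'I_V -> 'I_kappa) : R :=
  \sum_(t < V) (p t != y t)%:R.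

(* Reg for a realized play (inf over the empty set is +oo). *)
Definition regret (L : set (X -> 'I_kappa)) (K : R) (I : 'I_V -> instance)
  (yh y : {ffun 'I_V -> 'I_kappa}) : \bar R :=
  ((nmistakes yh y)%:E -
   ereal_inf [set (nmistakes (fun t => f (I t).2) y)%:E | f in LK L K I])%E.

Definition exp_regret (L : set (X -> 'I_kappa)) (K : R) (F A : strategy)
  (I : 'I_V -> instance) : \bar R :=
  (\sum_(yh : {ffun 'I_V -> 'I_kappa}) \sum_(y : {ffun 'I_V -> 'I_kappa})
     (play_prob F A I yh y)%:E * regret L K I yh y)%E.

Definition sgnb (b : bool) : R := if b then 1 else -1.

(* Rad_V(L_K(I_{1:V})), eps uniform on {-1,1}^{V x kappa} (sup over the
   empty set is -oo). *)
Definition Rad (L : set (X -> 'I_kappa)) (K : R) (I : 'I_V -> instance) : \bar R :=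
  (\sum_(e : {ffun 'I_V * 'I_kappa -> bool})
     ((2 ^+ (V * kappa))^-1)%:E *
     ereal_sup [set (\sum_(j < V) \sum_(k < kappa)
                       sgnb (e (j, k)) * ((f (I j).2 == k)%:R))%:E
               | f in LK L K I])%E.

End Setting.

(* Main.v *)
Require Import Defs.
From HB Require Import structures.
From mathcomp Require Import all_boot all_order all_algebra.
From mathcomp Require Import all_classical all_reals all_analysis.
From mathcomp Require Import ring lra.
Import Order.TTheory GRing.Theory Num.Theory.
Local Open Scope classical_set_scope.
Local Open Scope ring_scope.
Set Implicit Arguments. Unset Strict Implicit. Unset Printing Implicit Defensive.
Section Bigmax.
Variables (R : realFieldType) (I : finType).

Lemma bigmax_witness (x : R) (P : pred I) (F : I -> R) :
  \big[Order.max/x]_(i | P i) F i = x \/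
  exists2 i, P i & \big[Order.max/x]_(i | P i) F i = F i.
Proof.
elim/big_ind: _ => [|a b Ha Hb|i Pi]; [by left| |by right; exists i].
rewrite /Order.max; case: ifP => _; [exact: Hb|exact: Ha].
Qed.
End Bigmax.
Section Rad.
Variables (R : realType) (V k : nat).
Hypothesis hk : (2 <= k)%N.
Variable Sp : pred {ffun 'I_V -> 'I_k}.
Variable g0 : {ffun 'I_V -> 'I_k}.
Hypothesis Sg0 : Sp g0.

Definition valM (M : 'I_V -> 'I_k -> R) (g : {ffun 'I_V -> 'I_k}) :=
  \sum_t M t (g t).
Definition Mx (M : 'I_V -> 'I_k -> R) :=
  \big[Order.max/valM M g0]_(g | Sp g) valM M g.

Lemma Mx_ge M g : Sp g -> valM M g <= Mx M.
Proof. by move=> Sg; apply: le_bigmax_cond. Qed.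

Lemma Mx_le M b : (forall g, Sp g -> valM M g <= b) -> Mx M <= b.
Proof. by move=> H; apply: bigmax_le => //; exact: H. Qed.

Lemma Mx_ext M1 M2 : (forall t i, M1 t i = M2 t i) -> Mx M1 = Mx M2.
Proof.
move=> H; rewrite /Mx /valM.
have E : forall g, \sum_t M1 t (g t) = \sum_t M2 t (g t).
  by move=> g; apply: eq_bigr => t _; rewrite H.
rewrite E; apply: eq_bigr => g _; exact: E.
Qed.

Definition upd (M : 'I_V -> 'I_k -> R) (j : 'I_V) (x : 'I_k -> R) :=
  fun t i => if t == j then x i else M t i.

Definition cvec (a : 'I_k) : 'I_k -> R := fun i => k%:R * (i == a)%:R - 1.

Lemma count_true (i : 'I_k) :
  \sum_(r : {ffun 'I_k -> bool}) ((r i)%:R : R) = 2 ^+ k / 2.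
Proof.
have inv : involutive (fun r : {ffun 'I_k -> bool} =>
   [ffun l => if l == i then ~~ r l else r l]).
  by move=> r; apply/ffunP => l; rewrite !ffunE; case: eqP => // _; rewrite negbK.
have E1 : \sum_(r : {ffun 'I_k -> bool}) ((r i)%:R : R) =
          \sum_(r : {ffun 'I_k -> bool}) ((~~ r i)%:R : R).
  rewrite (reindex_inj (can_inj inv)); apply: eq_bigr => r _.
  by rewrite ffunE eqxx.
have E2 : \sum_(r : {ffun 'I_k -> bool}) (((r i)%:R : R) + (~~ r i)%:R) = 2 ^+ k.
  rewrite (eq_bigr (fun _ => 1)); last by move=> r _; case: (r i); rewrite /= ?addr0 ?add0r.
  by rewrite sumr_const card_ffun card_bool card_ord natrX.
rewrite big_split /= -E1 in E2.
by rewrite -E2; field.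
Qed.

Lemma row_ineq (M : 'I_V -> 'I_k -> R) (j : 'I_V) :
  (2 ^+ k)^-1 * \sum_(r : {ffun 'I_k -> bool}) Mx (upd M j (fun i => sgnb R (r i)))
  <= k%:R^-1 * \sum_(a : 'I_k) Mx (upd M j (cvec a)).
Proof.
set rest := fun g : {ffun 'I_V -> 'I_k} => \sum_(t | t != j) M t (g t).
have valE x g : valM (upd M j x) g = x (g j) + rest g.
  rewrite /valM (bigD1 j) //= /upd eqxx; congr (_ + _).
  by apply: eq_bigr => t /negbTE ->.
set M0 := \big[Order.max/rest g0]_(g | Sp g) rest g.
have restM0 g : Sp g -> rest g <= M0 by move=> Sg; apply: le_bigmax_cond.
set u := fun i => \big[Order.max/0]_(g | Sp g && (g j == i)) (2 + rest g - M0).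
set v := fun i => \big[Order.max/0]_(g | Sp g && (g j == i)) (k%:R + rest g - M0).
have u0 i : 0 <= u i by apply: bigmax_ge_id.
have v0 i : 0 <= v i by apply: bigmax_ge_id.
have kpos : (0 : R) < k%:R by rewrite ltr0n; apply: leq_trans hk.
have k2 : (2 : R) <= k%:R by rewrite (ler_nat R 2 k).
have uv i : u i <= 2 / k%:R * v i.
  apply: bigmax_le; first by rewrite mulr_ge0 // divr_ge0 // ltW.
  move=> g /andP [Sg /eqP gj].
  have hv : k%:R + rest g - M0 <= v i by apply: le_bigmax_cond; rewrite Sg gj eqxx.
  have d0 := restM0 g Sg.
  apply: (@le_trans _ _ (2 / k%:R * (k%:R + rest g - M0))); last first.
    by rewrite ler_pM2l // divr_gt0.
  have -> : 2 / k%:R * (k%:R + rest g - M0) = 2 + 2 / k%:R * (rest g - M0).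
    by field; rewrite gt_eqF.
  have : rest g - M0 <= 2 / k%:R * (rest g - M0).
    have t1 : 2 / k%:R <= 1 :> R by rewrite ler_pdivrMr // mul1r.
    nra.
  lra.
have LHS r : Mx (upd M j (fun i => sgnb R (r i))) <=
      M0 - 1 + \sum_i (r i)%:R * u i.
  apply: Mx_le => g Sg; rewrite valE.
  have d0 := restM0 g Sg.
  have S0 : 0 <= \sum_i ((r i)%:R : R) * u i.
    by apply: sumr_ge0 => i _; rewrite mulr_ge0.
  rewrite /sgnb; case rg: (r (g j)); last by lra.
  rewrite (bigD1 (g j)) //= rg mul1r.
  have : 2 + rest g - M0 <= u (g j) by apply: le_bigmax_cond; rewrite Sg eqxx.
  have : 0 <= \sum_(i | i != g j) ((r i)%:R : R) * u i.
    by apply: sumr_ge0 => i _; rewrite mulr_ge0.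
  lra.
have RHS a : M0 - 1 + v a <= Mx (upd M j (cvec a)).
  have [g1 Sg1 Eg1] : exists2 g, Sp g & M0 = rest g.
    rewrite /M0; case: (bigmax_witness (rest g0) Sp rest) => [->|[g Sg ->]]; by [exists g0|exists g].
  have h1 := Mx_ge (upd M j (cvec a)) Sg1.
  rewrite valE /cvec in h1.
  rewrite /v; case: (bigmax_witness 0 (fun g => Sp g && (g j == a)) (fun g => k%:R + rest g - M0))
     => [Ev|[g /andP [Sg /eqP gj] Ev]].
    rewrite Ev addr0; apply: le_trans h1.
    rewrite Eg1; case: (g1 j == a); rewrite /= ?mulr1 ?mulr0; lra.
  have h2 := Mx_ge (upd M j (cvec a)) Sg.
  rewrite valE /cvec gj eqxx mulr1 in h2.
  by rewrite Ev; apply: le_trans h2; lra.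
have kinv : 0 < k%:R^-1 :> R by rewrite invr_gt0.
have p2 : (0 : R) < 2 ^+ k by apply: exprn_gt0.
apply: (@le_trans _ _ (M0 - 1 + 2^-1 * \sum_i u i)).
  rewrite ler_pdivrMl // -[X in _ <= X]mulr1 -[X in _ <= X * _]mulr1.
  apply: (@le_trans _ _ (\sum_(r : {ffun 'I_k -> bool}) (M0 - 1 + \sum_i (r i)%:R * u i))).
    by apply: ler_sum => r _; exact: LHS.
  rewrite big_split /= sumr_const card_ffun card_bool card_ord.
  rewrite exchange_big /=.
  have -> : \sum_(j0 < k) \sum_(i : {ffun 'I_k -> bool}) (i j0)%:R * u j0
     = \sum_(j0 < k) (2 ^+ k / 2 * u j0).
    by apply: eq_bigr => j0 _; rewrite -mulr_suml count_true.
  rewrite !mulr1 -mulr_sumr -[(M0 - 1) *+ _]mulr_natr natrX.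
  by rewrite le_eqVlt; apply/orP; left; apply/eqP; field.
apply: (@le_trans _ _ (M0 - 1 + k%:R^-1 * \sum_a v a)).
  rewrite lerD2l mulr_sumr mulr_sumr; apply: ler_sum => i _.
  apply: (@le_trans _ _ (2^-1 * (2 / k%:R * v i))).
    by rewrite ler_pM2l ?invr_gt0 //; exact: uv.
  by rewrite le_eqVlt; apply/orP; left; apply/eqP; field; rewrite gt_eqF.
rewrite ler_pdivlMl //.
apply: (@le_trans _ _ (\sum_a (M0 - 1 + v a))); last by apply: ler_sum => a _; exact: RHS.
rewrite big_split /= sumr_const card_ord mulrDr mulrA mulfV ?mul1r; last by rewrite gt_eqF.
by rewrite mulr_natl.
Qed.
End Rad.
Section Hybrid.
Variables (R : realType) (V k : nat).
Hypothesis hk : (2 <= k)%N.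
Variable Sp : pred {ffun 'I_V -> 'I_k}.
Variable g0 : {ffun 'I_V -> 'I_k}.
Hypothesis Sg0 : Sp g0.

Local Notation Mx := (Mx Sp g0).
Local Notation upd := (@upd R V k).
Local Notation cvec := (@cvec R k).

Definition setrow (e : {ffun 'I_V * 'I_k -> bool}) (j : 'I_V) (r : {ffun 'I_k -> bool}) :=
  [ffun p : 'I_V * 'I_k => if p.1 == j then r p.2 else e p].
Definition rowof (e : {ffun 'I_V * 'I_k -> bool}) (j : 'I_V) : {ffun 'I_k -> bool} :=
  [ffun i => e (j, i)].
Definition sety (y : {ffun 'I_V -> 'I_k}) (j : 'I_V) (a : 'I_k) :=
  [ffun t => if t == j then a else y t].

Lemma setrow_sum (F : {ffun 'I_V * 'I_k -> bool} -> R) j :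
  \sum_e \sum_(r : {ffun 'I_k -> bool}) F (setrow e j r) = 2 ^+ k * \sum_e F e.
Proof.
pose tau := fun p : {ffun 'I_V * 'I_k -> bool} * {ffun 'I_k -> bool} =>
  (setrow p.1 j p.2, rowof p.1 j).
have inv : involutive tau.
  move=> [e r]; rewrite /tau /=; congr pair.
    apply/ffunP => [[t i]]; rewrite !ffunE /=.
    by case: (t == j) / eqP => [->|]; rewrite ?ffunE /= ?eqxx.
  by apply/ffunP => i; rewrite !ffunE /= eqxx.
have H : \sum_(p : {ffun 'I_V * 'I_k -> bool} * {ffun 'I_k -> bool}) F (tau p).1 = \sum_(p : {ffun 'I_V * 'I_k -> bool} * {ffun 'I_k -> bool}) F p.1.
  by rewrite (reindex_inj (can_inj inv)); apply: eq_bigr => p _; rewrite inv.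
rewrite pair_big /=.
transitivity (\sum_(p : {ffun 'I_V * 'I_k -> bool} * {ffun 'I_k -> bool}) F (tau p).1); first by apply: eq_bigr.
rewrite H.
transitivity (\sum_e \sum_(r : {ffun 'I_k -> bool}) F e); first by rewrite pair_big.
rewrite mulr_sumr.
apply: eq_bigr => e _; rewrite sumr_const card_ffun card_bool card_ord.
by rewrite -[_ *+ _]mulr_natl natrX.
Qed.

Lemma sety_sum (F : {ffun 'I_V -> 'I_k} -> R) j :
  \sum_y \sum_(a : 'I_k) F (sety y j a) = k%:R * \sum_y F y.
Proof.
pose tau := fun p : {ffun 'I_V -> 'I_k} * 'I_k => (sety p.1 j p.2, p.1 j).
have inv : involutive tau.
  move=> [y a]; rewrite /tau /=; congr pair; last by rewrite ffunE eqxx.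
  apply/ffunP => t; rewrite !ffunE; case: eqP => [->|] //.
have H : \sum_(p : {ffun 'I_V -> 'I_k} * 'I_k) F (tau p).1 = \sum_(p : {ffun 'I_V -> 'I_k} * 'I_k) F p.1.
  by rewrite (reindex_inj (can_inj inv)); apply: eq_bigr => p _; rewrite inv.
rewrite pair_big /=.
transitivity (\sum_(p : {ffun 'I_V -> 'I_k} * 'I_k) F (tau p).1); first by apply: eq_bigr.
rewrite H.
transitivity (\sum_y \sum_(r : 'I_k) F y); first by rewrite pair_big.
rewrite mulr_sumr.
apply: eq_bigr => y _; rewrite sumr_const card_ord.
by rewrite -[_ *+ _]mulr_natl.
Qed.

Definition mix (j : nat) (y : {ffun 'I_V -> 'I_k}) (e : {ffun 'I_V * 'I_k -> bool}) :=
  fun (t : 'I_V) (i : 'I_k) => if (t < j)%N then cvec (y t) i else sgnb R (e (t, i)).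

Definition D j := \sum_e \sum_y Mx (mix j y e).

Lemma D_step j (hj : (j < V)%N) : D j <= D j.+1.
Proof.
pose jo := Ordinal hj.
have kpos : (0 : R) < k%:R by rewrite ltr0n; apply: leq_trans hk.
have p2 : (0 : R) < 2 ^+ k by apply: exprn_gt0.
rewrite /D exchange_big [X in _ <= X]exchange_big /=.
have E1 y : \sum_e Mx (mix j y e) =
   \sum_e ((2 ^+ k)^-1 * \sum_(r : {ffun 'I_k -> bool})
            Mx (upd (mix j y e) jo (fun i => sgnb R (r i)))).
  rewrite -mulr_sumr.
  transitivity ((2 ^+ k)^-1 * \sum_e \sum_(r : {ffun 'I_k -> bool}) Mx (mix j y (setrow e jo r))).
    by rewrite (setrow_sum (fun e => Mx (mix j y e))) mulrA mulVf ?mul1r // gt_eqF.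
  congr (_ * _); apply: eq_bigr => e _; apply: eq_bigr => r _; apply: Mx_ext => t i.
  rewrite /mix /upd ffunE /=; have [->|ne] := eqVneq t jo.
    by rewrite ltnn.
  by [].
have E2 : \sum_y \sum_e Mx (mix j.+1 y e) =
   \sum_y \sum_e (k%:R^-1 * \sum_(a : 'I_k) Mx (upd (mix j y e) jo (cvec a))).
  rewrite exchange_big [X in _ = X]exchange_big /=; apply: eq_bigr => e _.
  rewrite -mulr_sumr.
  transitivity (k%:R^-1 * \sum_y \sum_(a : 'I_k) Mx (mix j.+1 (sety y jo a) e)).
    by rewrite (sety_sum (fun y => Mx (mix j.+1 y e))) mulrA mulVf ?mul1r // gt_eqF.
  congr (_ * _); apply: eq_bigr => y _; apply: eq_bigr => a _; apply: Mx_ext => t i.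
  rewrite /mix /upd ffunE /=; have [->|ne] := eqVneq t jo.
    by rewrite /= ltnSn.
  rewrite ltnS leq_eqVlt.
  by have -> : (val t == j) = false by apply/negbTE; move: ne; apply: contra => /eqP h; apply/eqP/val_inj.
rewrite E2; apply: ler_sum => y _; rewrite E1; apply: ler_sum => e _.
exact: row_ineq.
Qed.

Lemma hybrid :
  k%:R ^+ V * \sum_(e : {ffun 'I_V * 'I_k -> bool}) Mx (fun t i => sgnb R (e (t, i)))
  <= 2 ^+ (V * k) * \sum_(y : {ffun 'I_V -> 'I_k}) Mx (fun t i => cvec (y t) i).
Proof.
have H : forall j, (j <= V)%N -> D 0 <= D j.
  elim=> [//|j IH hj]; apply: le_trans (IH (ltnW hj)) (D_step hj).
have := H V (leqnn V); rewrite /D.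
have -> : \sum_e \sum_y Mx (mix 0 y e) =
   k%:R ^+ V * \sum_(e : {ffun 'I_V * 'I_k -> bool}) Mx (fun t i => sgnb R (e (t, i))).
  rewrite mulr_sumr; apply: eq_bigr => e _.
  rewrite (eq_bigr (fun _ => Mx (fun t i => sgnb R (e (t, i))))); last first.
    by move=> y _; apply: Mx_ext => t i.
  rewrite sumr_const card_ffun !card_ord.
  by rewrite -[_ *+ _]mulr_natl natrX.
have -> : \sum_e \sum_y Mx (mix V y e) =
   2 ^+ (V * k) * \sum_(y : {ffun 'I_V -> 'I_k}) Mx (fun t i => cvec (y t) i).
  rewrite exchange_big mulr_sumr; apply: eq_bigr => y _.
  rewrite (eq_bigr (fun _ => Mx (fun t i => cvec (y t) i))); last first.
    by move=> e _; apply: Mx_ext => t i; rewrite /mix ltn_ord.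
  rewrite sumr_const card_ffun card_bool card_prod !card_ord.
  by rewrite -[_ *+ _]mulr_natl natrX.
by [].
Qed.
End Hybrid.
Section Ext.
Variables (T : finType) (n : nat).

Definition ext (f : {ffun 'I_n -> T}) (v : T) : {ffun 'I_n.+1 -> T} :=
  [ffun i : 'I_n.+1 => if @insub _ (fun m => m < n)%N 'I_n (val i) is Some j then f j else v].
Definition restr (z : {ffun 'I_n.+1 -> T}) : {ffun 'I_n -> T} :=
  [ffun j => z (widen_ord (leqnSn n) j)].

Lemma ext_widen f v (j : 'I_n) : ext f v (widen_ord (leqnSn n) j) = f j.
Proof. by rewrite ffunE /= (valK j). Qed.

Lemma ext_max f v : ext f v ord_max = v.
Proof. by rewrite ffunE /= insubF // ltnn. Qed.

Lemma seq_of_ext f v : seq_of (ext f v) = rcons (seq_of f) v.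
Proof.
rewrite /seq_of enum_ordSr map_rcons ext_max -map_comp; congr rcons.
by apply: eq_map => j /=; rewrite ext_widen.
Qed.

Lemma ext_sum (R : realType) (F : {ffun 'I_n.+1 -> T} -> R) :
  \sum_z F z = \sum_f \sum_v F (ext f v).
Proof.
rewrite pair_big /=.
rewrite (reindex (fun p : {ffun 'I_n -> T} * T => ext p.1 p.2)) //.
exists (fun z => (restr z, z ord_max)).
  move=> [f v] _ /=; congr pair; last exact: ext_max.
  by apply/ffunP => j; rewrite ffunE ext_widen.
move=> z _ /=; apply/ffunP => i; rewrite ffunE.
case: insubP => [j Hj Ej|Hi].
  by rewrite ffunE; congr (z _); apply: val_inj; rewrite /= Ej.
have -> : i = ord_max by apply: val_inj => /=; move: (ltn_ord i); rewrite ltnS leq_eqVlt (negbTE Hi) orbF => /eqP.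
by [].
Qed.

Lemma size_seq_of (u : 'I_n -> T) : size (seq_of u) = n.
Proof. by rewrite /seq_of size_map size_enum_ord. Qed.

End Ext.

Section Game.
Variables (R : realType) (k : nat).
Hypothesis hk : (0 < k)%N.
Variable G : seq 'I_k -> seq 'I_k -> 'I_k -> R.
Hypothesis G1 : forall h1 h2, \sum_a G h1 h2 a = 1.

Definition W n (yh y : {ffun 'I_n -> 'I_k}) :=
  \prod_(t < n) (G (take t (seq_of yh)) (take t (seq_of y)) (yh t) / k%:R).

Definition Ex n (Psi : seq 'I_k -> seq 'I_k -> R) :=
  \sum_(yh : {ffun 'I_n -> 'I_k}) \sum_(y : {ffun 'I_n -> 'I_k})
     W yh y * Psi (seq_of yh) (seq_of y).

Lemma W_ext (n : nat) (f g : {ffun 'I_n -> 'I_k}) (a b : 'I_k) :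
  W (ext f a) (ext g b) = W f g * (G (seq_of f) (seq_of g) a / k%:R).
Proof.
rewrite /W big_ord_recr /= !seq_of_ext ext_max; congr (_ * _).
  apply: eq_bigr => t _; rewrite ext_widen -!cats1 !takel_cat //.
  by rewrite size_seq_of ltnW.
  by rewrite size_seq_of ltnW.
by rewrite -!cats1 !takel_cat ?size_seq_of // !take_oversize // size_seq_of.
Qed.

Lemma Ex_peel (n : nat) Psi :
  Ex n.+1 Psi = Ex n (fun h1 h2 => \sum_a \sum_b G h1 h2 a / k%:R * Psi (rcons h1 a) (rcons h2 b)).
Proof.
rewrite /Ex ext_sum; apply: eq_bigr => f _.
rewrite exchange_big /= ext_sum.
apply: eq_bigr => g _.
rewrite exchange_big /= mulr_sumr; apply: eq_bigr => a _.
rewrite mulr_sumr; apply: eq_bigr => b _.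
by rewrite W_ext !seq_of_ext -!mulrA.
Qed.

Lemma Ex_ext (n : nat) Psi1 Psi2 :
  (forall yh y : {ffun 'I_n -> 'I_k}, Psi1 (seq_of yh) (seq_of y) = Psi2 (seq_of yh) (seq_of y)) ->
  Ex n Psi1 = Ex n Psi2.
Proof. by move=> H; apply: eq_bigr => yh _; apply: eq_bigr => y _; rewrite H. Qed.

Lemma Ex_snd n (Phi : seq 'I_k -> R) :
  Ex n (fun _ h2 => Phi h2) = k%:R ^- n * \sum_(y : {ffun 'I_n -> 'I_k}) Phi (seq_of y).
Proof.
have kpos : (0 : R) < k%:R by rewrite ltr0n.
elim: n Phi => [|n IH] Phi.
  rewrite /Ex expr0 invr1 mul1r.
  have E : forall z : {ffun 'I_0 -> 'I_k}, seq_of z = [::].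
    by move=> z; apply: size0nil; rewrite size_seq_of.
  rewrite (eq_bigr (fun _ => Phi [::])); last first.
    move=> yh _; rewrite (eq_bigr (fun _ => Phi [::])); last first.
      by move=> y _; rewrite /W big_ord0 mul1r E.
    by rewrite sumr_const card_ffun !card_ord expn0 mulr1n.
  by apply: eq_bigr => y _; rewrite E.
rewrite Ex_peel.
rewrite (@Ex_ext _ _ (fun _ h2 => k%:R^-1 * \sum_b Phi (rcons h2 b))); last first.
  move=> yh y.
  transitivity (\sum_a G (seq_of yh) (seq_of y) a * (k%:R^-1 * \sum_b Phi (rcons (seq_of y) b))).
    apply: eq_bigr => a _; rewrite mulr_sumr mulr_sumr; apply: eq_bigr => b _.
    by rewrite !mulrA.
  by rewrite -mulr_suml G1 mul1r.
rewrite IH -mulr_sumr mulrA.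
have -> : k%:R ^- n.+1 = k%:R ^- n * k%:R^-1 :> R.
  by rewrite exprSr invfM.
congr (_ * _); rewrite ext_sum; apply: eq_bigr => y _; apply: eq_bigr => b _.
by rewrite seq_of_ext.
Qed.

Lemma Ex_one n : Ex n (fun _ _ => 1) = 1.
Proof.
have kpos : (0 : R) < k%:R by rewrite ltr0n.
rewrite (Ex_snd n (fun _ => 1)) sumr_const card_ffun !card_ord.
by rewrite natrX mulVf // expf_neq0 // gt_eqF.
Qed.

Definition mism (h1 h2 : seq 'I_k) : R := (count (fun p => p.1 != p.2) (zip h1 h2))%:R.

Lemma Ex_mism n : Ex n mism = n%:R * (1 - k%:R^-1).
Proof.
have kpos : (0 : R) < k%:R by rewrite ltr0n.
elim: n => [|n IH].
  rewrite mul0r /Ex; apply: big1 => yh _; apply: big1 => y _.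
  have E : forall z : {ffun 'I_0 -> 'I_k}, seq_of z = [::].
    by move=> z; apply: size0nil; rewrite size_seq_of.
  by rewrite !E /mism /= mulr0.
rewrite Ex_peel.
rewrite (@Ex_ext _ _ (fun h1 h2 => mism h1 h2 + (1 - k%:R^-1))); last first.
  move=> yh y.
  have step a b : mism (rcons (seq_of yh) a) (rcons (seq_of y) b) =
                  mism (seq_of yh) (seq_of y) + (a != b)%:R.
    by rewrite /mism zip_rcons ?size_seq_of // -cats1 count_cat /= addn0 natrD.
  under eq_bigr do under eq_bigr do rewrite step.
  have Sb a : \sum_(b : 'I_k) ((a != b)%:R : R) = k%:R - 1.
    rewrite (eq_bigr (fun b => 1 - ((a == b)%:R : R))); last by move=> b _; case: (a == b); rewrite /= ?subrr ?subr0.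
    rewrite sumrB sumr_const card_ord (bigD1 a) //= eqxx big1 ?addr0 //.
    by move=> b /negbTE; rewrite eq_sym => ->.
  transitivity (\sum_a G (seq_of yh) (seq_of y) a / k%:R *
                  (k%:R * mism (seq_of yh) (seq_of y) + (k%:R - 1))).
    apply: eq_bigr => a _; rewrite -mulr_sumr; congr (_ * _).
    by rewrite big_split /= Sb sumr_const card_ord -[_ *+ _]mulr_natl.
  rewrite -mulr_suml -mulr_suml G1 mul1r.
  by field; rewrite gt_eqF.
rewrite /Ex.
transitivity (Ex n mism + (1 - k%:R^-1) * Ex n (fun _ _ => 1)).
  rewrite /Ex mulr_sumr -big_split /=; apply: eq_bigr => yh _.
  rewrite mulr_sumr -big_split /=; apply: eq_bigr => y _.
  by rewrite mulr1 mulrDr [_ * W yh y]mulrC.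
by rewrite Ex_one mulr1 IH -addn1 natrD mulrDl mul1r.
Qed.
End Game.
Section IntScale.
Local Open Scope ereal_scope.
Context d (T : measurableType d) (R : realType).
Variable mu : {measure set T -> \bar R}.
Import HBNNSimple.

Lemma nn_scale_le (c : R) (c0 : (0 < c)%R) (f g : T -> \bar R) :
  (forall x, 0 <= f x) -> (forall x, 0 <= g x) ->
  (forall x, c%:E * f x <= g x) ->
  c%:E * \int[mu]_x f x <= \int[mu]_x g x.
Proof.
move=> f0 g0 fg.
rewrite -lee_pdivlMl // (ge0_integralTE mu f0) (ge0_integralTE mu g0).
apply: ge_ereal_sup => _ [h /= hf <-].
rewrite lee_pdivlMl //.
rewrite -sintegralrM.
rewrite (_ : (cst c \* h)%R = scale_nnsfun h (ltW c0)) //.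
apply: ereal_sup_ubound => /=; exists (scale_nnsfun h (ltW c0)) => //.
move=> x /=; apply: le_trans (fg x).
by rewrite EFinM lee_wpmul2l // lee_fin ltW.
Qed.

Lemma int_scale (c : R) (c0 : (0 < c)%R) (f g : T -> \bar R) :
  (forall x, c%:E * f x <= g x) ->
  c%:E * \int[mu]_x f x <= \int[mu]_x g x.
Proof.
move=> fg.
rewrite (integralE _ _ f) (integralE _ _ g).
have A : c%:E * \int[mu]_x f^\+ x <= \int[mu]_x g^\+ x.
  apply: nn_scale_le => // x; rewrite !funeposE.
  have [f0|f0] := leP 0 (f x).
    by apply: (le_trans (fg x)); rewrite le_max lexx.
  by rewrite mule0 le_max lexx orbT.
have B : c^-1%:E * \int[mu]_x g^\- x <= \int[mu]_x f^\- x.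
  apply: nn_scale_le => //; first by rewrite invr_gt0.
  move=> x; rewrite !funenegE.
  have [g0|g0] := leP (- g x) 0.
    by rewrite mule0 le_max lexx orbT.
  rewrite le_max; apply/orP; left.
  rewrite lee_pdivrMl // muleN leeN2; exact: fg.
rewrite lee_pdivrMl // in B.
have b0 : 0 <= \int[mu]_x f^\- x by apply: integral_ge0 => x _; exact: funeneg_ge0.
move: b0 A B.
case: (\int[mu]_x f^\- x) => [b| |] // b0 A B.
  rewrite muleBr //; last by rewrite fin_num_adde_defl.
  by apply: leeB.
by rewrite addeNy mulrNy gtr0_sg // mul1e leNye.
Qed.
End IntScale.
Lemma sum_match (R : realType) (k : nat) (a : 'I_k -> R) (x : 'I_k) :
  \sum_(i < k) a i * (x == i)%:R = a x.
Proof.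
rewrite (bigD1 x) //= eqxx mulr1 big1 ?addr0 // => i /negbTE.
by rewrite eq_sym => ->; rewrite mulr0.
Qed.

Lemma zip_map2 (A B C : Type) (f : A -> B) (g : A -> C) (s : seq A) :
  zip (map f s) (map g s) = map (fun t => (f t, g t)) s.
Proof. by elim: s => //= a s ->. Qed.

Lemma nm_mism (R : realType) (V k : nat) (yh y : {ffun 'I_V -> 'I_k}) :
  nmistakes R yh y = @mism R k (seq_of yh) (seq_of y).
Proof.
rewrite /nmistakes /mism /seq_of zip_map2 count_map -sum1_count natr_sum.
by rewrite [RHS]big_mkcond enumT /=; apply: eq_bigr => t _; case: (yh t != y t).
Qed.

Lemma fy_seq (V k : nat) (d : 'I_k) (y : {ffun 'I_V -> 'I_k}) :
  [ffun t : 'I_V => nth d (seq_of y) t] = y.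
Proof.
apply/ffunP => t; rewrite ffunE /seq_of (nth_map t) ?size_enum_ord //.
by rewrite nth_ord_enum.
Qed.

Lemma nm_val (R : realType) (V k : nat) (hk : (0 < k)%N) (g y : {ffun 'I_V -> 'I_k}) :
  nmistakes R g y = V%:R - k%:R^-1 * (valM (fun t i => @cvec R k (y t) i) g + V%:R).
Proof.
have kpos : (0 : R) < k%:R by rewrite ltr0n.
rewrite /nmistakes /valM /cvec.
have -> : (V%:R : R) = \sum_(t < V) 1 by rewrite sumr_const card_ord.
rewrite -big_split /= mulr_sumr -sumrB; apply: eq_bigr => t _.
have k0 : (k%:R : R) != 0 by rewrite pnatr_eq0 -lt0n.
rewrite subrK (mulKf k0).
by case: (g t == y t); rewrite /= ?subrr ?subr0.
Qed.
Lemma main_pw (R : realType) (V k : nat) (hk : (2 <= k)%N) (X : Type)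
  (L : set (X -> 'I_k)) (K : R) (F : strategy R V k X) (hF : valid_strategy F)
  (I : 'I_V -> instance R V k X) :
  ((k%:R^-1)%:E * Rad L K I <= exp_regret L K F (fun _ _ _ _ => (k%:R^-1)%R) I)%E.
Proof.
set A : strategy R V k X := fun _ _ _ _ => k%:R^-1.
have k0 : (0 < k)%N by apply: leq_trans hk.
have kpos : (0 : R) < k%:R by rewrite ltr0n.
have kinv : (0 : R) < k%:R^-1 by rewrite invr_gt0.
have p2 : (0 : R) < (2 ^+ (V * k))^-1 by rewrite invr_gt0 exprn_gt0.
pose gf := fun f : X -> 'I_k => [ffun t => f (I t).2].
case: (pselect (exists f, LK L K I f)) => [[f0 Hf0]|nof]; last first.
  have E : LK L K I = set0.
    by apply/seteqP; split => f // Hf; exfalso; apply: nof; exists f.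
  have -> : Rad L K I = -oo%E.
    rewrite /Rad E.
    under eq_bigr do rewrite image_set0 ereal_sup0 mulrNy gtr0_sg // mul1e.
    by rewrite (bigD1 [ffun=> true]) //= addNye.
  by rewrite mulrNy gtr0_sg // mul1e leNye.
pose Sp : pred {ffun 'I_V -> 'I_k} := fun g => `[< exists f, LK L K I f /\ gf f = g >].
pose g0 := gf f0.
have Sg0 : Sp g0 by apply/asboolP; exists f0.
pose sg := fun (e : {ffun 'I_V * 'I_k -> bool}) (t : 'I_V) (i : 'I_k) => sgnb R (e (t, i)).
pose cv := fun (y : {ffun 'I_V -> 'I_k}) (t : 'I_V) (i : 'I_k) => @cvec R k (y t) i.
have S1 : (Rad L K I <= (\sum_e ((2 ^+ (V * k))^-1 * @Mx R V k Sp g0 (sg e)))%:E)%E.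
  rewrite /Rad -sumEFin; apply: lee_sum => e _.
  rewrite EFinM; apply: lee_wpmul2l; first by rewrite lee_fin ltW.
  apply: ge_ereal_sup => _ [f Hf <-]; rewrite lee_fin.
  have -> : \sum_(j < V) \sum_(i < k) sgnb R (e (j, i)) * (f (I j).2 == i)%:R
            = valM (sg e) (gf f).
    by rewrite /valM; apply: eq_bigr => j _; rewrite sum_match ffunE.
  by apply: (@Mx_ge R V k Sp g0 (sg e) (gf f)); apply/asboolP; exists f.
have [gs Hgs] : {gs : {ffun 'I_V -> 'I_k} -> {ffun 'I_V -> 'I_k} &
    forall y, Sp (gs y) /\ @Mx R V k Sp g0 (cv y) = valM (cv y) (gs y)}.
  apply: (@choice _ _ (fun y g => Sp g /\ @Mx R V k Sp g0 (cv y) = valM (cv y) g)) => y.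
  case: (bigmax_witness (valM (cv y) g0) Sp (valM (cv y))) => [E|[g Sg E]].
    by exists g0; split => //; rewrite /Mx E.
  by exists g; split => //; rewrite /Mx E.
have [fs Hfs] : {fs : {ffun 'I_V -> 'I_k} -> (X -> 'I_k) &
    forall y, LK L K I (fs y) /\ gf (fs y) = gs y}.
  apply: (@choice _ _ (fun y f => LK L K I f /\ gf f = gs y)) => y; have := (Hgs y).1 => /asboolP [f [Hf Ef]]; by exists f.
have Pge0 yh y : 0 <= play_prob F A I yh y.
  apply: prodr_ge0 => t _; apply: mulr_ge0; first exact: (hF _ _ _).1.
  exact: ltW.
have S4 : ((\sum_yh \sum_y play_prob F A I yh y *
              (nmistakes R yh y - nmistakes R (gs y) y))%:E
           <= exp_regret L K F A I)%E.
  rewrite /exp_regret -sumEFin; apply: lee_sum => yh _.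
  rewrite -sumEFin; apply: lee_sum => y _.
  rewrite EFinM; apply: lee_wpmul2l; first by rewrite lee_fin.
  rewrite /regret EFinB; apply: leeB => //.
  have [Hf Ef] := Hfs y.
  apply: ereal_inf_lbound; exists (fs y) => //; congr EFin.
  by rewrite -Ef /nmistakes; apply: eq_bigr => t _; rewrite ffunE.
pose G := fun (h1 h2 : seq 'I_k) (a : 'I_k) => F (take (size h1).+1 (seq_of I)) h1 h2 a.
have G1 : forall h1 h2, \sum_a G h1 h2 a = 1 by move=> h1 h2; exact: (hF _ _ _).2.
have PW yh y : play_prob F A I yh y = W G yh y.
  rewrite /play_prob /W; apply: eq_bigr => t _.
  by rewrite /G size_takel // size_seq_of ltnW.
pose d0 : 'I_k := Ordinal k0.
pose fy := fun h2 : seq 'I_k => [ffun t : 'I_V => nth d0 h2 t].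
have S5 : \sum_yh \sum_y play_prob F A I yh y *
              (nmistakes R yh y - nmistakes R (gs y) y)
          = V%:R * (1 - k%:R^-1) - k%:R ^- V * \sum_y nmistakes R (gs y) y.
  transitivity (Ex G V (@mism R k) - Ex G V (fun _ h2 => nmistakes R (gs (fy h2)) (fy h2))).
    rewrite /Ex -sumrB; apply: eq_bigr => yh _; rewrite -sumrB; apply: eq_bigr => y _.
    by rewrite PW mulrBr nm_mism /fy fy_seq.
  rewrite (Ex_mism k0 G1) (Ex_snd k0 G1); congr (_ - _ * _).
  by apply: eq_bigr => y _; rewrite /fy fy_seq.
apply: le_trans S4; rewrite S5.
apply: (@le_trans _ _ ((k%:R^-1 * \sum_e ((2 ^+ (V * k))^-1 * @Mx R V k Sp g0 (sg e)))%:E)).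
  by rewrite EFinM; apply: lee_wpmul2l => //; rewrite lee_fin ltW.
rewrite lee_fin.
have H := hybrid R hk Sg0.
set a := \sum_(e : {ffun 'I_V * 'I_k -> bool}) @Mx R V k Sp g0 (fun t i => sgnb R (e (t, i))) in H.
set b := \sum_(y : {ffun 'I_V -> 'I_k}) @Mx R V k Sp g0 (fun t => cvec R (y t)) in H.
have Ea : \sum_e ((2 ^+ (V * k))^-1 * @Mx R V k Sp g0 (sg e)) = (2 ^+ (V * k))^-1 * a.
  by rewrite mulr_sumr.
have Eb : \sum_y nmistakes R (gs y) y = k%:R ^+ V * V%:R - k%:R^-1 * (b + k%:R ^+ V * V%:R).
  rewrite (eq_bigr (fun y => V%:R - k%:R^-1 * (@Mx R V k Sp g0 (cv y) + V%:R))); last first.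
    by move=> y _; rewrite (nm_val _ k0) -(Hgs y).2.
  have CS : \sum_(y : {ffun 'I_V -> 'I_k}) (V%:R : R) = k%:R ^+ V * V%:R.
    by rewrite sumr_const card_ffun !card_ord -[_ *+ _]mulr_natl natrX.
  by rewrite sumrB CS -mulr_sumr big_split /= CS.
rewrite Ea Eb.
set p := (k%:R ^+ V : R) in H Eb *.
set q := (2 ^+ (V * k) : R) in H *.
have pp : 0 < p by rewrite exprn_gt0.
have qp : 0 < q by rewrite exprn_gt0.
have -> : V%:R * (1 - k%:R^-1) - p^-1 * (p * V%:R - k%:R^-1 * (b + p * V%:R))
          = k%:R^-1 * (p^-1 * b).
  by field; rewrite !gt_eqF.
rewrite ler_pM2l //.
have -> : q^-1 * a = (p * q)^-1 * (p * a) by field; rewrite !gt_eqF.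
have -> : p^-1 * b = (p * q)^-1 * (q * b) by field; rewrite !gt_eqF.
by rewrite ler_pM2l // invr_gt0 mulr_gt0.
Qed.
Theorem corollary1 (R : realType) (V kappa : nat) (hV : (1 <= V)%N)
  (hkappa : (2 <= kappa)%N) (X : Type) (L : set (X -> 'I_kappa)) (K : R)
  (hK : 0 <= K) (d : measure_display) (Omega : measurableType d)
  (P : probability Omega R) (iota : Omega -> 'I_V -> instance R V kappa X) :
  exists A : strategy R V kappa X, valid_strategy A /\
    forall F : strategy R V kappa X, valid_strategy F ->
      ((kappa%:R^-1)%:E * \int[P]_w Rad L K (iota w)
         <= \int[P]_w exp_regret L K F A (iota w))%E.
Proof.
have k0 : (0 < kappa)%N by apply: leq_trans hkappa.
have kpos : (0 : R) < kappa%:R by rewrite ltr0n.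
exists (fun _ _ _ _ => (kappa%:R^-1)%R); split.
  move=> hI hp hy; split => [k|]; first by rewrite invr_ge0 ltW.
  by rewrite sumr_const card_ord -[_ *+ _]mulr_natl mulfV // gt_eqF.
move=> F hF.
apply: int_scale; first by rewrite invr_gt0.
by move=> w; exact: main_pw.
Qed.
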